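(* Let $(X,G)$ be a Mustafa–Sims metric space which is perfect, i.e. for each $x\in X$ there is a sequence $(x_n)$ in $X\setminus\{x\}$ that $G$-converges to $x$. Then $G$ is symmetric in the sense that $G(x,y,y)=G(x,x,y)$ for all $x,y\in X$.
   Context: A Mustafa–Sims metric on $X$ is a map $G:X^3\to[0,\infty)$ such that: $G$ is invariant under all permutations of its arguments and $G(x,x,x)=0$; $G(x,x,y)=0$ implies $x=y$; $G(x,x,y)\le G(x,y,z)$ whenever $y\ne z$; and $G(x,y,z)\le G(x,u,u)+G(u,y,z)$ for all $x,y,z,u$. A sequence $(x_n)$ $G$-converges to $x$ if $G(x_m,x_n,x)\to0$ as $m,n\to\infty$. *)

(* Defs.v *)
From Stdlib Require Import Reals.
Open Scope R_scope.

Definition is_G_metric {X : Type} (G : X -> X -> X -> R) : Prop :=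
  (forall x y z, 0 <= G x y z) /\
  (forall x y z, G x y z = G x z y /\ G x y z = G y x z
                 /\ G x y z = G y z x /\ G x y z = G z x y
                 /\ G x y z = G z y x) /\
  (forall x, G x x x = 0) /\
  (forall x y, G x x y = 0 -> x = y) /\
  (forall x y z, y <> z -> G x x y <= G x y z) /\
  (forall x y z u, G x y z <= G x u u + G u y z).

Definition G_converges {X : Type} (G : X -> X -> X -> R)
  (s : nat -> X) (x : X) : Prop :=
  forall eps, 0 < eps ->
    exists N : nat, forall m n : nat, (N <= m)%nat -> (N <= n)%nat ->
      G (s m) (s n) x < eps.

Definition G_perfect {X : Type} (G : X -> X -> X -> R) : Prop :=
  forall x : X, exists s : nat -> X,
    (forall n, s n <> x) /\ G_converges G s x.

(* Main.v *)
Require Import Defs.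
From Stdlib Require Import Reals Lra.
Open Scope R_scope.

Lemma half (X : Type) (G : X -> X -> X -> R)
  (HG : is_G_metric G) (Hperf : G_perfect G) :
  forall x y : X, G x y y <= G x x y.
Proof.
  intros x y.
  destruct HG as [H0 [HP [H3 [H4 [H5 H6]]]]].
  destruct (Hperf x) as [s [Hs Hc]].
  apply Rnot_lt_le; intro Hlt.
  set (eps := G x y y - G x x y).
  assert (Heps : 0 < eps / 3) by (unfold eps; lra).
  destruct (Hc _ Heps) as [N HN].
  specialize (HN N N (le_n N) (le_n N)).
  set (t := s N) in *.
  assert (A := H6 x y y t).
  assert (B : G t y y = G y y t) by (destruct (HP t y y) as [_ [_ [? _]]]; auto).
  assert (C := H5 y t x (Hs N)).
  assert (D : G y t x = G t x y) by (destruct (HP y t x) as [_ [_ [? _]]]; auto).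
  assert (E := H6 t x y x).
  assert (F : G t x x = G x x t) by (destruct (HP t x x) as [_ [_ [? _]]]; auto).
  assert (H := H6 x x t t).
  assert (I : G t x t = G x t t) by (destruct (HP x t t) as [_ [? _]]; auto).
  assert (J : G t t x = G x t t) by (destruct (HP x t t) as [_ [_ [? _]]]; auto).
  unfold eps in *; lra.
Qed.

Theorem proposition7 (X : Type) (G : X -> X -> X -> R)
  (HG : is_G_metric G) (Hperf : G_perfect G) :
  forall x y : X, G x y y = G x x y.
Proof.
  intros x y.
  assert (h1 := half X G HG Hperf x y).
  assert (h2 := half X G HG Hperf y x).
  destruct HG as [_ [HP _]].
  destruct (HP y x x) as [_ [_ [? _]]].
  destruct (HP y y x) as [_ [_ [_ [? _]]]].
  lra.
Qed.
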